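(* For every $\Delta \ge 1$ there is a local algorithm, using only a port numbering (no unique identifiers), that on every weakly $2$-coloured graph $\mathcal{G}=(V,E)$ without isolated nodes and of maximum degree at most $\Delta$ outputs a dominating set $D$ with $|D| \le |V|/2$ and hence $|D| \le \tfrac{\Delta+1}{2}|D^*|$, where $D^*$ is a minimum dominating set of $\mathcal{G}$.
   Context: Model: a graph $\mathcal{G}=(V,E)$ without isolated nodes is a distributed system; every node runs the same deterministic algorithm. Communication is synchronous: in each round every node receives messages from its neighbours, performs local computation, and sends messages to its neighbours. Each node knows its degree, its own input label (e.g. its colour), and the global degree bound $\Delta$. A local algorithm is one that terminates after $T$ rounds, where $T$ may depend on $\Delta$ but not on the number of nodes; its output at a node is whether the node belongs to the solution. A port numbering means each node has a fixed ordering of its incident edges, known to it; nodes have no identifiers. A weak $2$-colouring assigns each node black or white so that every non-isolated node has at least one neighbour of the opposite colour; it is given as input. *)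

(* Defs.v *)
From mathcomp Require Import all_boot.
Set Implicit Arguments. Unset Strict Implicit. Unset Printing Implicit Defensive.

Definition simple_graph (V : finType) (e : rel V) : Prop :=
  (forall v, ~~ e v v) /\ (forall u v, e u v = e v u).

Definition nbrs (V : finType) (e : rel V) (v : V) : {set V} := [set u | e v u].
Definition deg (V : finType) (e : rel V) (v : V) : nat := #|nbrs e v|.

Definition no_isolated (V : finType) (e : rel V) : Prop := forall v, exists u, e v u.
Definition max_deg_le (V : finType) (e : rel V) (Delta : nat) : Prop :=
  forall v, deg e v <= Delta.

Definition weak_2col (V : finType) (e : rel V) (col : V -> bool) : Prop :=
  forall v, exists u, e v u && (col u != col v).

(* Port numbering: port i (i < deg v) of v leads to neighbour p v i; this is a
   bijection between {0,..,deg v - 1} and the neighbours of v. *)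
Definition port_numbering (V : finType) (e : rel V) (p : V -> nat -> V) : Prop :=
  (forall v i, i < deg e v -> e v (p v i)) /\
  (forall v i j, i < deg e v -> j < deg e v -> p v i = p v j -> i = j).

Definition back_port (V : finType) (e : rel V) (p : V -> nat -> V) (u v : V) : nat :=
  find (fun j => p u j == v) (iota 0 (deg e u)).

(* A deterministic synchronous algorithm in the port-numbering model (no
   identifiers).  Initial state depends only on degree and input colour
   (Delta is fixed by the outer quantifier, so the algorithm may depend on it).
   In each round a node sends [send s i] through port i and updates its state
   from the messages received on its ports (None for non-existing ports).
   It stops after [rounds] rounds (a constant, independent of the graph) and
   outputs [out s]. *)
Unset Implicit Arguments.
Record PNAlgo := {
  St : Type;
  Msg : Type;
  init : nat -> bool -> St;
  send : St -> nat -> Msg;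
  recv : St -> (nat -> option Msg) -> St;
  out : St -> bool;
  rounds : nat
}.
Set Implicit Arguments.

Fixpoint run (A : PNAlgo) (V : finType) (e : rel V) (p : V -> nat -> V)
    (col : V -> bool) (t : nat) : V -> St A :=
  match t with
  | 0 => fun v => init A (deg e v) (col v)
  | t'.+1 =>
      let s := run A e p col t' in
      fun v => recv A (s v) (fun i =>
        if i < deg e v then Some (send A (s (p v i)) (back_port e p (p v i) v))
        else None)
  end.

Definition output_set (A : PNAlgo) (V : finType) (e : rel V) (p : V -> nat -> V)
    (col : V -> bool) : {set V} :=
  [set v | out A (run A e p col (rounds A) v)].

Definition dominating (V : finType) (e : rel V) (D : {set V}) : Prop :=
  forall v, v \in D \/ exists2 u, u \in D & e v u.

Definition min_dominating (V : finType) (e : rel V) (D : {set V}) : Prop :=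
  dominating e D /\ forall S : {set V}, dominating e S -> #|D| <= #|S|.

(* Main.v *)
Require Import Defs.
From mathcomp Require Import all_boot.
Set Implicit Arguments.
Unset Strict Implicit.

Lemma port_surj (V : finType) (e : rel V) (p : V -> nat -> V) v u :
  port_numbering e p -> e v u -> exists2 i, i < deg e v & p v i = u.
Proof.
move=> [pe pi] evu.
pose s := map (p v) (iota 0 (deg e v)).
have us : uniq s.
  rewrite map_inj_in_uniq ?iota_uniq // => i j; rewrite !mem_iota /= !add0n.
  by move=> hi hj; apply: pi.
have sub : {subset s <= enum (nbrs e v)}.
  move=> x /mapP[i]; rewrite mem_iota add0n /= => hi ->.
  by rewrite mem_enum inE pe.
have sz : size (enum (nbrs e v)) <= size s by rewrite size_map size_iota -cardE.
have [_ eqs] := uniq_min_size us sub sz.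
have : u \in s by rewrite eqs mem_enum inE.
by case/mapP=> i; rewrite mem_iota add0n /= => hi ->; exists i.
Qed.

Lemma back_portP (V : finType) (e : rel V) (p : V -> nat -> V) u v :
  port_numbering e p -> e u v ->
  back_port e p u v < deg e u /\ p u (back_port e p u v) = v.
Proof.
move=> hp euv; have [i hi piv] := @port_surj _ e p u v hp euv.
have hh : has (fun j => p u j == v) (iota 0 (deg e u)).
  by apply/hasP; exists i; rewrite ?mem_iota ?piv //.
have hf : back_port e p u v < deg e u by move: hh; rewrite has_find size_iota.
split=> //.
have := nth_find 0 hh; rewrite -/(back_port e p u v) nth_iota ?add0n //; by move/eqP.
Qed.

Record S := mkS { sd : nat; sc : bool; snc : nat -> bool; spk : bool; sz : bool; sdd : bool }.
Record M := mkM { mc : bool; mp : bool; mz : bool; md : bool }.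
Definition dm := mkM false false false false.
Definition fS (s : S) := find (fun i => snc s i != sc s) (iota 0 (sd s)).
Definition Ainit (d : nat) (c : bool) := mkS d c (fun _ => false) false false false.
Definition Asend (s : S) (j : nat) :=
  mkM (sc s) (j == fS s) [&& sc s, ~~ spk s & j == fS s] [&& ~~ sc s, ~~ sz s & j == fS s].
Definition Arecv (s : S) (m : nat -> option M) :=
  let g i := odflt dm (m i) in
  mkS (sd s) (sc s) (fun i => mc (g i))
    (has (fun i => mp (g i)) (iota 0 (sd s)))
    (has (fun i => mz (g i)) (iota 0 (sd s)))
    (has (fun i => md (g i)) (iota 0 (sd s))).
Definition Aout (s : S) := if sc s then sdd s else sz s.
Definition Alg : PNAlgo := Build_PNAlgo S M Ainit Asend Arecv Aout 4.

Section Sem.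
Context (V : finType) (e : rel V) (p : V -> nat -> V) (col : V -> bool).
Definition F u := find (fun i => col (p u i) != col u) (iota 0 (deg e u)).
Definition f u := p u (F u).
Definition picked v := [exists u, f u == v].
Definition inZ v := [exists u, [&& col u, ~~ picked u & f u == v]].
Definition inDb v := [exists u, [&& ~~ col u, ~~ inZ u & f u == v]].
End Sem.

Lemma run_sd (V : finType) (e : rel V) p col t (v : V) : sd (run Alg e p col t v) = deg e v /\ sc (run Alg e p col t v) = col v.
Proof. by elim: t v => [|t IH] v //=; apply: IH. Qed.

Lemma run_S (V : finType) (e : rel V) p col t (v : V) :
  run Alg e p col t.+1 v = Arecv (run Alg e p col t v) (fun i =>
        if i < deg e v then Some (Asend (run Alg e p col t (p v i)) (back_port e p (p v i) v))
        else None).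
Proof. by []. Qed.

Lemma F_prop (V : finType) (e : rel V) p col (u : V) :
  port_numbering e p -> weak_2col e col ->
  [/\ F e p col u < deg e u, col (f e p col u) != col u & e u (f e p col u)].
Proof.
move=> hp hw; have [w /andP[euw cw]] := hw u.
have [i hi piw] := port_surj hp euw.
have hh : has (fun j => col (p u j) != col u) (iota 0 (deg e u)).
  by apply/hasP; exists i; rewrite ?mem_iota ?piw //.
have hF : F e p col u < deg e u by move: hh; rewrite has_find size_iota.
split=> //; last by apply: hp.1.
by have := nth_find 0 hh; rewrite -/(F e p col u) nth_iota ?add0n.
Qed.

Lemma key (V : finType) (e : rel V) p col (v : V) (Q : pred V) :
  simple_graph e -> port_numbering e p -> weak_2col e col ->
  has (fun i => Q (p v i) && (back_port e p (p v i) v == F e p col (p v i))) (iota 0 (deg e v))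
  = [exists u, Q u && (f e p col u == v)].
Proof.
move=> [_ sym] hp hw; apply/hasP/existsP.
  move=> [i]; rewrite mem_iota add0n /= => hi /andP[qu /eqP hb].
  exists (p v i); rewrite qu /=.
  have evu := hp.1 _ _ hi.
  have [_ pb] := back_portP hp (etrans (sym _ _) evu).
  by rewrite /f -hb pb.
move=> [u /andP[qu /eqP fu]].
have [hF _ euf] := F_prop u hp hw.
have evu : e v u by rewrite sym -fu.
have [i hi piu] := port_surj hp evu.
exists i; first by rewrite mem_iota.
rewrite piu qu /=; apply/eqP.
have euv : e u v by rewrite sym.
have [hb pb] := back_portP hp euv.
apply: (hp.2 u) => //; by rewrite pb.
Qed.

Lemma run_fS (V : finType) (e : rel V) p col t (v : V) :
  fS (run Alg e p col t.+1 v) = F e p col v.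
Proof.
rewrite run_S /fS /Arecv /=; have [-> _] := run_sd e p col t v.
apply: eq_in_find => i; rewrite mem_iota add0n /= => hi.
rewrite hi /=; have [_ ->] := run_sd e p col t (p v i); have [_ ->] := run_sd e p col t v.
by [].
Qed.

Lemma spk_recv s m : spk (Arecv s m) = has (fun i => mp (odflt dm (m i))) (iota 0 (sd s)). Proof. by []. Qed.
Lemma sz_recv s m : sz (Arecv s m) = has (fun i => mz (odflt dm (m i))) (iota 0 (sd s)). Proof. by []. Qed.
Lemma sdd_recv s m : sdd (Arecv s m) = has (fun i => md (odflt dm (m i))) (iota 0 (sd s)). Proof. by []. Qed.
Lemma odfltS (x : M) : odflt dm (Some x) = x. Proof. by []. Qed.
Lemma mp_send s j : mp (Asend s j) = (j == fS s). Proof. by []. Qed.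
Lemma mz_send s j : mz (Asend s j) = [&& sc s, ~~ spk s & j == fS s]. Proof. by []. Qed.
Lemma md_send s j : md (Asend s j) = [&& ~~ sc s, ~~ sz s & j == fS s]. Proof. by []. Qed.

Lemma run_spk (V : finType) (e : rel V) p col t (v : V) :
  simple_graph e -> port_numbering e p -> weak_2col e col ->
  spk (run Alg e p col t.+2 v) = picked e p col v.
Proof.
move=> hs hp hw.
rewrite run_S spk_recv; have [-> _] := run_sd e p col t.+1 v.
rewrite -[picked _ _ _ _](key v xpredT hs hp hw).
apply: eq_in_has => i; rewrite mem_iota add0n leq0n andTb => hi.
by rewrite hi odfltS mp_send run_fS.
Qed.

Lemma run_sz (V : finType) (e : rel V) p col t (v : V) :
  simple_graph e -> port_numbering e p -> weak_2col e col ->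
  sz (run Alg e p col t.+3 v) = inZ e p col v.
Proof.
move=> hs hp hw.
rewrite run_S sz_recv; have [-> _] := run_sd e p col t.+2 v.
rewrite /inZ -(@eq_existsb _ (fun u => (col u && ~~ picked e p col u) && (f e p col u == v))); last by move=> u; rewrite andbA.
rewrite -(key v (fun u => col u && ~~ picked e p col u) hs hp hw).
apply: eq_in_has => i; rewrite mem_iota add0n leq0n andTb => hi.
rewrite hi odfltS mz_send; have [_ ->] := run_sd e p col t.+2 (p v i).
by rewrite run_fS run_spk // andbA.
Qed.

Lemma run_sdd (V : finType) (e : rel V) p col t (v : V) :
  simple_graph e -> port_numbering e p -> weak_2col e col ->
  sdd (run Alg e p col t.+4 v) = inDb e p col v.
Proof.
move=> hs hp hw.
rewrite run_S sdd_recv; have [-> _] := run_sd e p col t.+3 v.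
rewrite /inDb -(@eq_existsb _ (fun u => (~~ col u && ~~ inZ e p col u) && (f e p col u == v))); last by move=> u; rewrite andbA.
rewrite -(key v (fun u => ~~ col u && ~~ inZ e p col u) hs hp hw).
apply: eq_in_has => i; rewrite mem_iota add0n leq0n andTb => hi.
rewrite hi odfltS md_send; have [_ ->] := run_sd e p col t.+3 (p v i).
by rewrite run_fS run_sz // andbA.
Qed.

Lemma outE (V : finType) (e : rel V) p col (v : V) :
  simple_graph e -> port_numbering e p -> weak_2col e col ->
  (v \in output_set Alg e p col) = (if col v then inDb e p col v else inZ e p col v).
Proof.
move=> hs hp hw; rewrite /output_set inE.
change (Aout (run Alg e p col 4 v) = (if col v then inDb e p col v else inZ e p col v)); rewrite /Aout.
have [_ ->] := run_sd e p col 4 v.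
by rewrite (run_sdd 0) // (run_sz 1).
Qed.

Lemma bound_dstar (V : finType) (e : rel V) (Delta : nat) (Dstar : {set V}) :
  (forall u v, e u v = e v u) -> max_deg_le e Delta -> dominating e Dstar ->
  #|V| <= Delta.+1 * #|Dstar|.
Proof.
move=> sym hD hdom.
pose g v := odflt v [pick d in Dstar | (d == v) || e v d].
have gP v : g v \in Dstar /\ ((g v == v) || e v (g v)).
  rewrite /g; case: pickP => [d /andP[-> ->] //|/= H].
  case: (hdom v) => [vD|[u uD evu]]; first by move: (H v); rewrite vD eqxx.
  by move: (H u); rewrite uD evu orbT.
have -> : #|V| = \sum_(v : V) 1 by rewrite sum1_card.
rewrite (partition_big g (mem Dstar)) /=; last by move=> v _; case: (gP v).
rewrite mulnC -sum_nat_const; apply: leq_sum => d dD.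
rewrite sum1_card.
apply: (@leq_trans #|d |: nbrs e d|); last by rewrite cardsU1; case: (_ \in _) => /=; [apply: ltnW; rewrite ltnS; apply: hD | rewrite ltnS; apply: hD].
apply: subset_leq_card; apply/subsetP => v; rewrite !inE => /eqP <-.
case: (gP v) => _ /orP[/eqP -> | evg]; first by rewrite eqxx.
by rewrite sym evg orbT.
Qed.

Theorem theorem6 (Delta : nat) (hDelta : 1 <= Delta) :
  exists A : PNAlgo,
    forall (V : finType) (e : rel V) (p : V -> nat -> V) (col : V -> bool),
      simple_graph e -> no_isolated e -> max_deg_le e Delta ->
      port_numbering e p -> weak_2col e col ->
      let D := output_set A e p col in
      [/\ dominating e D,
          2 * #|D| <= #|V|
        & forall Dstar : {set V}, min_dominating e Dstar ->
            2 * #|D| <= Delta.+1 * #|Dstar| ].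
Proof.
exists Alg => V e p col hs hn hdeg hp hw D.
have memD v : (v \in D) = (if col v then inDb e p col v else inZ e p col v).
  exact: outE.
clearbody D.
have sym := hs.2.
pose ff := f e p col.
have fP u : col (ff u) = ~~ col u /\ e u (ff u).
  have [_ c eu] := F_prop u hp hw; split=> //.
  by move: c; case: (col (ff u)); case: (col u).
have dom : dominating e D.
  move=> v; case cv: (col v).
    case pk: (picked e p col v).
      move: pk => /existsP[u /eqP fu].
      have [cu euf] := fP u; rewrite /ff fu cv in cu.
      case zu: (inZ e p col u).
        right; exists u; first by rewrite memD; move: cu; case: (col u) => //= _; rewrite zu.
        by rewrite sym -fu.
      left; rewrite memD cv; apply/existsP; exists u.
      by rewrite -cu zu fu eqxx.
    right; exists (ff v); last by case: (fP v).
    have [c _] := fP v; rewrite memD c cv /=.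
    by apply/existsP; exists v; rewrite cv pk eqxx.
  case zv: (inZ e p col v); first by left; rewrite memD cv.
  right; exists (ff v); last by case: (fP v).
  have [c _] := fP v; rewrite memD c cv /=.
  by apply/existsP; exists v; rewrite cv zv eqxx.
have sz2 : 2 * #|D| <= #|V|.
  pose B := [set v | col v].
  pose U := [set u | col u && ~~ picked e p col u].
  pose W := [set w | ~~ col w && ~~ inZ e p col w].
  have h1 : #|D :&: B| <= #|W|.
    apply: (leq_trans _ (leq_imset_card ff W)); apply: subset_leq_card.
    apply/subsetP => v; rewrite !inE memD => /andP[].
    move=> + cv; rewrite cv => /existsP[u /andP[cu /andP[zu /eqP fu]]].
    by apply/imsetP; exists u; rewrite // inE cu zu.
  have h2 : #|D :\: B| <= #|U|.
    apply: (leq_trans _ (leq_imset_card ff U)); apply: subset_leq_card.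
    apply/subsetP => v; rewrite !inE memD => /andP[cv].
    rewrite (negbTE cv) => /existsP[u /andP[cu /andP[zu /eqP fu]]].
    by apply/imsetP; exists u; rewrite // inE cu zu.
  have h3 : #|W| + #|U| <= #|~: D|.
    rewrite -[#|W| + #|U|]subn0.
    have <- : #|W :&: U| = 0.
      apply/eqP; rewrite cards_eq0; apply/eqP/setP => x; rewrite !inE.
      by case: (col x); rewrite ?andbF.
    rewrite -cardsU; apply: subset_leq_card; apply/subsetP => x.
    rewrite !inE memD; case/orP => /andP[cx h].
      by rewrite (negbTE cx).
    rewrite cx; apply/existsP => -[u /andP[_ /andP[_ /eqP fu]]].
    by move: h; rewrite /picked; case/existsP; exists u; rewrite fu.
  rewrite -(cardsC D) mul2n -addnn leq_add2l.
  by rewrite -(cardsID B D); exact: leq_trans (leq_add h1 h2) h3.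
split=> // Dstar [hdom _].
exact: (leq_trans sz2 (bound_dstar sym hdeg hdom)).
Qed.
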